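(* The number of decomposable orientations of the $n$-dimensional cube (all of which are unique sink orientations) is $2^{\Theta(2^n)}$.
   Context: Let $Q^n = 2^{[n]}$ be the vertex set of the $n$-cube, with $u,v$ adjacent iff $|u\oplus v|=1$; for $J\subseteq[n]$ and $v\in Q^n$ the face $F_{J,v}=\{u : v\oplus u\subseteq J\}$ has dimension $|J|$. For an orientation of the cube's edges and a face $F_{J,v}$, a coordinate $j\in J$ is combed in that face if all edges of the face in direction $j$ are directed the same way (all from the endpoint not containing $j$ to the endpoint containing $j$, or all the other way). An orientation is decomposable if every face of dimension at least $1$ has a combed coordinate. A unique sink orientation is an orientation in which every nonempty face has a unique sink. *)

(* Defs.v *)
From mathcomp Require Import all_boot.
Set Implicit Arguments. Unset Strict Implicit. Unset Printing Implicit Defensive.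

(* Vertices of Q^n: subsets of [n] = 'I_n, i.e. {set 'I_n}.
   An orientation is encoded by its "outgoing" indicator
     d : {ffun {set 'I_n} * 'I_n -> bool},
   where d (v, j) = true iff the edge {v, v (+) {j}} is directed away from v.
   Orientations of Q^n are in bijection with the d satisfying [is_orientation]. *)

Definition flip n (v : {set 'I_n}) (j : 'I_n) : {set 'I_n} :=
  (v :\: [set j]) :|: ([set j] :\: v).

Definition cube_fun n := {ffun ({set 'I_n} * 'I_n) -> bool}.

Definition is_orientation n (d : cube_fun n) : bool :=
  [forall v : {set 'I_n}, forall j : 'I_n, d (v, j) == ~~ d (flip v j, j)].

Definition face n (J v : {set 'I_n}) : {set {set 'I_n}} :=
  [set u : {set 'I_n} | ((v :\: u) :|: (u :\: v)) \subset J].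

(* Edge in direction j at u (with j \notin u) goes from u to u :|: {j};
   it is directed "upward" (towards the endpoint containing j) iff d (u, j). *)
Definition combed n (d : cube_fun n) (J v : {set 'I_n}) (j : 'I_n) : bool :=
  (j \in J) &&
  ([forall u in face J v, (j \notin u) ==> d (u, j)] ||
   [forall u in face J v, (j \notin u) ==> ~~ d (u, j)]).

Definition decomposable n (d : cube_fun n) : bool :=
  is_orientation d &&
  [forall J : {set 'I_n}, forall v : {set 'I_n},
     (J != set0) ==> [exists j, combed d J v j]].

Definition face_sinks n (d : cube_fun n) (J v : {set 'I_n}) : {set {set 'I_n}} :=
  [set u in face J v | [forall j in J, ~~ d (u, j)]].

Definition is_uso n (d : cube_fun n) : bool :=
  is_orientation d &&
  [forall J : {set 'I_n}, forall v : {set 'I_n}, #|face_sinks d J v| == 1].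

Definition num_decomposable n : nat := #|[set d : cube_fun n | decomposable d]|.

(* Main.v *)
Require Import Defs.
From mathcomp Require Import all_boot zify.
Set Implicit Arguments. Unset Strict Implicit. Unset Printing Implicit Defensive.

Lemma in_flip n (u : {set 'I_n}) j i :
  (i \in flip u j) = if i == j then j \notin u else i \in u.
Proof.
rewrite /flip !inE; case: (i =P j) => [->|] /=; first by case: (j \in u).
by move=> _; rewrite andbF orbF.
Qed.

Lemma faceP n (J v u : {set 'I_n}) :
  reflect (forall i, i \notin J -> (i \in u) = (i \in v)) (u \in face J v).
Proof.
rewrite inE; apply: (iffP subsetP) => H i.
- move=> iJ; apply/eqP; apply: contraR iJ => neq; apply: H.
  by move: neq; rewrite !inE; case: (i \in u); case: (i \in v).
- move=> iD; apply: contraT => iJ; move: iD; rewrite !inE (H i iJ).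
  by case: (i \in v).
Qed.

Lemma flip_face n (J v u : {set 'I_n}) j :
  j \in J -> u \in face J v -> flip u j \in face J v.
Proof.
move=> jJ /faceP H; apply/faceP => i iJ; rewrite in_flip.
have -> : (i == j) = false by apply: contraNF iJ => /eqP ->.
exact: H.
Qed.

Lemma combedP n (d : cube_fun n) (J v : {set 'I_n}) j :
  is_orientation d -> combed d J v j ->
  j \in J /\ exists b, forall u, u \in face J v -> d (u, j) = (b == (j \notin u)).
Proof.
move=> /forallP Ho /andP [jJ H]; split => //.
have key : forall b, (forall u, u \in face J v -> j \notin u -> d (u,j) = b) ->
   forall u, u \in face J v -> d (u,j) = (b == (j \notin u)).
  move=> b Hb u uF; case ju: (j \in u) => /=.
  - have fF : flip u j \in face J v by exact: flip_face.
    have /forallP /(_ j) /eqP -> := Ho u.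
    by rewrite Hb // ?in_flip ?eqxx ?ju //; case: b.
  - by rewrite Hb ?ju //; case: b.
case/orP: H => /forall_inP H; [exists true | exists false]; apply: key => u uF ju;
  have := H u uF; rewrite ju /=.
  - by move=> ->.
  - by move/negbTE.
Qed.

Definition wb n (v : {set 'I_n}) j (b : bool) := if b then v :|: [set j] else v :\ j.
Arguments wb : simpl never.

Lemma in_wb n (v : {set 'I_n}) j b i : (i \in wb v j b) = if i == j then b else i \in v.
Proof.
rewrite /wb; case: b; rewrite !inE; case: (i =P j) => //= _; rewrite ?orbF ?andbT ?orbT //.
Qed.

Lemma face_split n (J v u : {set 'I_n}) j b : j \in J ->
  (u \in face (J :\ j) (wb v j b)) = ((j \in u) == b) && (u \in face J v).
Proof.
move=> jJ; apply/faceP/andP.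
- move=> H; split.
    by rewrite H ?in_wb ?eqxx // in_setD1 eqxx.
  apply/faceP => i iJ.
  have ij : (i == j) = false by apply: contraNF iJ => /eqP ->.
  by rewrite H ?in_wb ?ij // in_setD1 negb_and iJ orbT.
- case=> [/eqP Hj /faceP H] i; rewrite in_setD1 negb_and negbK => /orP [/eqP ->|iJ].
    by rewrite in_wb eqxx.
  have ij : (i == j) = false by apply: contraNF iJ => /eqP ->.
  by rewrite in_wb ij H.
Qed.

Lemma in_sinks n (d : cube_fun n) (J v u : {set 'I_n}) :
  (u \in face_sinks d J v) = (u \in face J v) && [forall j in J, ~~ d (u, j)].
Proof. by rewrite /face_sinks in_set. Qed.

Lemma dec_sinks n (d : cube_fun n) : decomposable d ->
  forall k (J v : {set 'I_n}), #|J| = k -> #|face_sinks d J v| = 1.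
Proof.
move=> /andP [Ho /forallP HD]; elim=> [|k IH] J v HJ.
  move/cards0_eq: HJ => ->.
  have -> : face_sinks d set0 v = [set v]; last by rewrite cards1.
  apply/setP => u; rewrite in_sinks in_set1.
  have -> : [forall j in set0, ~~ d (u, j)] by apply/forall_inP => j; rewrite inE.
  rewrite andbT; apply/faceP/eqP => [H|-> //]; apply/setP => i; apply: H.
  by rewrite inE.
have J0 : J != set0 by apply/eqP => E; rewrite E cards0 in HJ.
have /forallP /(_ v) /implyP /(_ J0) /existsP [j Hc] := HD J.
have [jJ [b Hb]] := combedP Ho Hc.
have -> : face_sinks d J v = face_sinks d (J :\ j) (wb v j b).
  apply/setP => u; rewrite !in_sinks face_split //.
  case uF: (u \in face J v); last by rewrite andbF.
  rewrite andbT; apply/idP/idP.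
  - move=> /forall_inP H; apply/andP; split.
      by have := H j jJ; rewrite Hb //; case: (b); case: (j \in u).
    by apply/forall_inP => i; rewrite in_setD1 => /andP [_ iJ]; exact: H.
  - move=> /andP [/eqP ju /forall_inP H]; apply/forall_inP => i iJ.
    case: (i =P j) => [->|/eqP ij]; first by rewrite Hb // ju; case: (b).
    by apply: H; rewrite in_setD1 ij.
apply: IH; move: HJ; rewrite (cardsD1 j J) jJ; by case.
Qed.

Lemma dec_uso n (d : cube_fun n) : decomposable d -> is_uso d.
Proof.
move=> Hd; rewrite /is_uso; have /andP [Ho _] := Hd; rewrite Ho /=.
apply/forallP => J; apply/forallP => v; apply/eqP; exact: (dec_sinks Hd).
Qed.

Definition restr n (d : cube_fun n) (J v : {set 'I_n}) : cube_fun n :=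
  [ffun x => [&& x.1 \in face J v, x.2 \in J & d x]].

Definition Gf n (J v : {set 'I_n}) (j : 'I_n) (b : bool) (r0 r1 : cube_fun n) : cube_fun n :=
  [ffun x => if (x.1 \in face J v) && (x.2 \in J) then
     (if x.2 == j then b == (j \notin x.1) else if j \in x.1 then r1 x else r0 x)
   else false].

Definition DS n := [set d : cube_fun n | decomposable d].
Definition SS n (J v : {set 'I_n}) := [set restr d J v | d in DS n].

Fixpoint f k := if k is k'.+1 then 2 * k * (f k' * f k') else 1.

Lemma restr_G n (d : cube_fun n) (J v : {set 'I_n}) j b :
  j \in J -> (forall u, u \in face J v -> d (u, j) = (b == (j \notin u))) ->
  restr d J v = Gf J v j b (restr d (J :\ j) (wb v j false)) (restr d (J :\ j) (wb v j true)).
Proof.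
move=> jJ Hb; apply/ffunP => -[u i]; rewrite !ffunE /=.
case uF: (u \in face J v) => //=; case iJ: (i \in J) => //=.
case: (i =P j) => [->|/eqP ij]; first exact: Hb.
rewrite !face_split // uF !in_setD1 ij iJ /=.
by case: (j \in u).
Qed.

Lemma card_bigcup_le (T I : finType) (P : {pred I}) (F : I -> {set T}) :
  #|\bigcup_(i in P) F i| <= \sum_(i in P) #|F i|.
Proof.
apply: (big_ind2 (fun (A : {set T}) s => #|A| <= s)) => //.
  by rewrite cards0.
move=> A s B t HA HB; rewrite cardsU; apply: leq_trans (leq_subr _ _) _.
exact: leq_add.
Qed.

Lemma SS_bound n k (J v : {set 'I_n}) : #|J| = k -> #|SS J v| <= f k.
Proof.
elim: k J v => [|k IH] J v HJ.
  move/cards0_eq: HJ => ->.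
  apply: leq_trans (_ : #|[set [ffun=> false] : cube_fun n]| <= 1); last by rewrite cards1.
  apply: subset_leq_card; apply/subsetP => r /imsetP [d _ ->]; rewrite inE.
  by apply/eqP/ffunP => x; rewrite !ffunE in_set0 /= andbF.
pose T j := [set Gf J v j x.1 x.2.1 x.2.2 | x in setX [set: bool]
   (setX (SS (J :\ j) (wb v j false)) (SS (J :\ j) (wb v j true)))].
have sub : SS J v \subset \bigcup_(j in J) T j.
  apply/subsetP => r /imsetP [d]; rewrite inE => dD ->.
  have /andP [Ho /forallP HD] := dD.
  have J0 : J != set0 by apply/eqP => E; rewrite E cards0 in HJ.
  have /forallP /(_ v) /implyP /(_ J0) /existsP [j Hc] := HD J.
  have [jJ [b Hb]] := combedP Ho Hc.
  apply/bigcupP; exists j => //; rewrite (restr_G jJ Hb).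
  apply/imsetP; exists (b, (restr d (J :\ j) (wb v j false), restr d (J :\ j) (wb v j true))) => //.
  by rewrite !inE /=; apply/andP; split; apply: imset_f; rewrite inE.
apply: leq_trans (subset_leq_card sub) _.
apply: leq_trans (card_bigcup_le _ _) _.
apply: leq_trans (_ : \sum_(j in J) (2 * (f k * f k)) <= _).
  apply: leq_sum => j jJ.
  have HJ' : #|J :\ j| = k by move: HJ; rewrite (cardsD1 j J) jJ; case.
  apply: leq_trans (leq_imset_card _ _) _.
  rewrite !cardsX cardsT card_bool leq_mul2l /=.
  by apply: leq_mul; apply: IH.
by rewrite sum_nat_const HJ /= mulnA [k.+1 * 2]mulnC.
Qed.

Lemma f_bound k : f k * 2 ^ (k + 2) <= 2 ^ (2 ^ k.+1).
Proof.
elim: k => [|k IH] //=.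
have E : 2 ^ (2 ^ k.+2) = 2 ^ (2 ^ k.+1) * 2 ^ (2 ^ k.+1).
  by rewrite -expnD addnn -mul2n -expnS.
rewrite E; apply: leq_trans (leq_mul IH IH).
have lk : k < 2 ^ k by apply: ltn_expl.
rewrite -[k.+1 + 2]addn1 expnD.
rewrite [2 ^ (k+2)]expnD -mulnA.
rewrite (_ : 2 ^ 2 = 4) // expn1.
move: lk; generalize (f k) (2 ^ k) => a p lk.
have h1 : k.+1 * (a * a * p) <= p * (a * a * p) by apply: leq_mul.
nia.
Qed.

Lemma num_upper n : num_decomposable n <= 2 ^ (2 * 2 ^ n).
Proof.
have -> : num_decomposable n = #|SS [set: 'I_n] set0|.
  have E : SS [set: 'I_n] set0 = DS n; last by rewrite E.
  apply/setP => d; apply/imsetP/idP => [[d' dD ->]|dD]; last first.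
    exists d => //.
    apply/ffunP => x; rewrite ffunE in_setT /=.
    by have -> : x.1 \in face [set: 'I_n] set0 by apply/faceP => i; rewrite in_setT.
  have -> : restr d' [set: 'I_n] set0 = d'.
    apply/ffunP => x; rewrite ffunE in_setT /=.
    by have -> : x.1 \in face [set: 'I_n] set0 by apply/faceP => i; rewrite in_setT.
  by rewrite inE in dD; rewrite inE.
apply: leq_trans (SS_bound _ (erefl _)) _.
rewrite cardsT card_ord -expnS.
apply: leq_trans (f_bound n).
by rewrite leq_pmulr // expn_gt0.
Qed.

Definition proj m (u : {set 'I_m.+1}) : {set 'I_m} :=
  [set i | widen_ord (leqnSn m) i \in u].

Definition dphi m (phi : {ffun {set 'I_m} -> bool}) : cube_fun m.+1 :=
  [ffun x => if x.2 == ord_max then phi (proj x.1) != (ord_max \in x.1)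
             else x.2 \notin x.1].

Lemma widen_neq m (i : 'I_m) : (widen_ord (leqnSn m) i == ord_max) = false.
Proof. by apply/negbTE; rewrite -val_eqE /= neq_ltn ltn_ord. Qed.

Lemma proj_flip m (u : {set 'I_m.+1}) : proj (flip u ord_max) = proj u.
Proof. by apply/setP => i; rewrite /proj !in_set !in_set1 widen_neq /= andbF orbF. Qed.

Lemma dphi_dec m phi : decomposable (@dphi m phi).
Proof.
apply/andP; split.
  apply/forallP => v; apply/forallP => j; rewrite !ffunE /=.
  case: (j =P ord_max) => [->|_]; rewrite in_flip eqxx.
    by rewrite proj_flip; case: (phi _); case: (ord_max \in v).
  by rewrite negbK.
apply/forallP => J; apply/forallP => v; apply/implyP => J0; apply/existsP.
case: (boolP [exists k in J, k != ord_max]).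
  move=> /exists_inP [k kJ kne]; exists k; rewrite /combed kJ /=.
  apply/orP; left; apply/forall_inP => u _; apply/implyP => ku.
  by rewrite ffunE /= (negbTE kne) ku.
move=> Hn.
have Hall : forall i, i \in J -> i = ord_max.
  move=> i iJ; apply/eqP; apply: contraR Hn => ne; apply/exists_inP; by exists i.
have [j jJ] := set0Pn _ J0.
have jm := Hall j jJ; subst j.
exists ord_max; rewrite /combed jJ /=.
pose u0 := v :\ (ord_max : 'I_m.+1).
have Hu : forall u, u \in face J v -> ord_max \notin u -> u = u0.
  move=> u /faceP uF nu; apply/setP => i; rewrite in_setD1.
  case: (i =P ord_max) => [->|/eqP ne]; first by rewrite (negbTE nu).
  rewrite /= uF //; apply: contra ne => /Hall ->; by [].
case: (boolP (dphi phi (u0, ord_max))) => h; apply/orP; [left|right];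
  apply/forall_inP => u uF; apply/implyP => nu; by rewrite (Hu u uF nu).
Qed.

Lemma dphi_inj m : injective (@dphi m).
Proof.
move=> p1 p2 E; apply/ffunP => S.
pose u := [set widen_ord (leqnSn m) i | i in S].
have pu : proj u = S.
  apply/setP => i; rewrite inE mem_imset //.
  by move=> a b /(congr1 val) /= /val_inj.
have nu : (ord_max \in u) = false.
  by apply/negbTE/imsetP => -[i _] /eqP; rewrite eq_sym widen_neq.
have := congr1 (fun d : cube_fun m.+1 => d (u, ord_max)) E; rewrite !ffunE /= eqxx pu nu.
by case: (p1 S); case: (p2 S).
Qed.

Lemma num_lower m : 2 ^ (2 ^ m) <= num_decomposable m.+1.
Proof.
have -> : 2 ^ (2 ^ m) = #|[set dphi p | p : {ffun {set 'I_m} -> bool}]|.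
  rewrite card_imset; last exact: dphi_inj.
  by rewrite card_ffun card_bool -[#|{set 'I_m}|]cardsT -powersetT card_powerset cardsT card_ord.
apply: subset_leq_card; apply/subsetP => d /imsetP [p _ ->].
by rewrite inE dphi_dec.
Qed.

Theorem theorem9 :
  (forall n (d : cube_fun n), decomposable d -> is_uso d) /\
  exists a b N : nat, 0 < a /\ 0 < b /\
    forall n, N <= n ->
      2 ^ (2 ^ n) <= (num_decomposable n) ^ a /\
      num_decomposable n <= 2 ^ (b * 2 ^ n).
Proof.
split; first exact: dec_uso.
exists 2, 2, 1; do 2 split => //.
case=> [//|m] _; split; last exact: num_upper.
apply: leq_trans (_ : (2 ^ 2 ^ m) ^ 2 <= _).
  by rewrite -expnM expnS mulnC.
by rewrite leq_exp2r // num_lower.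
Qed.
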